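(* Let $(TQ\times\mathbb R^m,\vec\lambda^L,E_L)$ be the $m$-contact Lagrangian system of a regular Lagrangian $L:TQ\times\mathbb R^m\to\mathbb R$, and let $$X=F_i\frac{\partial}{\partial q^i}+G_j\frac{\partial}{\partial \dot q^j}+H_k\frac{\partial}{\partial z^k},\qquad F_i,G_j,H_k\in C^\infty(TQ\times\mathbb R^m),$$ be a vector field on $TQ\times\mathbb R^m$. If $$-X(L)-[X_{E_L},X]^v(L)+\sum_{k=1}^m\frac{\partial L}{\partial z^k}H_k=0,$$ then the function $X^v(L)$ is a dissipated quantity of the system, i.e. $X_{E_L}(X^v(L))=-X^v(L)\sum_{k=1}^mR_k(E_L)$.
   Context: $Q$ is an $n$-dimensional manifold; $TQ\times\mathbb R^m$ has local coordinates $(q^i,\dot q^i,z^1,\dots,z^m)$. $L$ is regular if the matrix $W_{ij}=\partial^2L/\partial\dot q^i\partial\dot q^j$ is invertible; $(W^{ij})$ denotes its inverse. Define the $1$-forms $\lambda^L_k=dz^k-\frac{\partial L}{\partial\dot q^j}dq^j$, $k=1,\dots,m$ (so $d\lambda^L_k=d\lambda^L_1$ for all $k$), the vector fields $R_k=\frac{\partial}{\partial z^k}-W^{ij}\frac{\partial^2L}{\partial\dot q^i\partial z^k}\frac{\partial}{\partial\dot q^j}$ (which satisfy $\lambda^L_i(R_k)=\delta^i_k$, $i_{R_k}d\lambda^L_1=0$), and the energy $E_L=\dot q^i\frac{\partial L}{\partial\dot q^i}-L$. The forms $\lambda^L_k$ define a uniform $m$-contact structure on $TQ\times\mathbb R^m$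 with Reeb vector fields $R_k$. $X_{E_L}$ is the unique vector field with $\lambda^L_k(X_{E_L})=-E_L$ for all $k$ and $i_{X_{E_L}}d\lambda^L_1=dE_L-\sum_{k=1}^mR_k(E_L)\lambda^L_k$. The vertical endomorphism is $S=\frac{\partial}{\partial\dot q^i}\otimes dq^i$, and for a vector field $Z=F_i\partial_{q^i}+G_j\partial_{\dot q^j}+H_k\partial_{z^k}$ one writes $Z^v:=S(Z)=F_i\frac{\partial}{\partial\dot q^i}$. A function $g$ is a dissipated quantity if $X_{E_L}(g)=-g\sum_{k=1}^mR_k(E_L)$. *)

(* Defs.v *)
From HB Require Import structures.
From mathcomp Require Import all_boot all_order all_algebra.
From mathcomp Require Import all_classical all_reals all_analysis.
Set Implicit Arguments. Unset Strict Implicit. Unset Printing Implicit Defensive.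
Import Order.TTheory GRing.Theory Num.Theory.
Import numFieldNormedType.Exports.
Local Open Scope classical_set_scope.
Local Open Scope ring_scope.

Section MContact.
Context {R : realType} {n m : nat}.

(* Points of the coordinate domain of TQ x R^m: coordinates
   (q^1..q^n, qdot^1..qdot^n, z^1..z^m) stored in a row vector. *)
Local Notation N := (n + n + m)%N.
Local Notation P := 'rV[R]_N.

Definition iq (i : 'I_n) : 'I_N := lshift m (lshift n i).
Definition iv (i : 'I_n) : 'I_N := lshift m (rshift n i).
Definition iz (k : 'I_m) : 'I_N := rshift (n + n) k.

Definition qpart (x : P) : 'rV[R]_n := \row_i x 0 (iq i).
(* coordinate domain  U x R^n x R^m  of TQ x R^m, for a chart domain U of Q *)
Definition cdom (U : set 'rV[R]_n) : set P := [set x | U (qpart x)].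

Definition ebasis (a : 'I_N) : P := delta_mx 0 a.
Definition pd (a : 'I_N) (f : P -> R) : P -> R := fun x => 'D_(ebasis a) f x.

Definition iterD (vs : seq P) (f : P -> R) : P -> R :=
  foldr (fun v g => 'D_v g) f vs.
Definition smooth_on (D : set P) (f : P -> R) : Prop :=
  forall (vs : seq P) (x : P), D x -> differentiable (iterD vs f) x.

(* vector fields, given by their components w.r.t. the coordinate basis *)
Definition vfield := P -> P.
Definition vf_smooth_on (D : set P) (Y : vfield) : Prop :=
  forall a : 'I_N, smooth_on D (fun x => Y x 0 a).
Definition act (Y : vfield) (f : P -> R) : P -> R :=
  fun x => \sum_(a < N) Y x 0 a * pd a f x.
Definition lie (X Y : vfield) : vfield :=
  fun x => \row_a (act X (fun y => Y y 0 a) x - act Y (fun y => X y 0 a) x).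
(* vertical endomorphism  S = d/dqdot^i (x) dq^i :  Z^v = S(Z) *)
Definition vlift (Y : vfield) : vfield :=
  fun x => \row_a (\sum_(i < n | a == iv i) Y x 0 (iq i)).

(* 1-forms (coefficient rows w.r.t. dx^a) and 2-forms (antisymmetric
   coefficient matrices: omega = sum_(a<b) omega_ab dx^a /\ dx^b) *)
Definition form1 := P -> P.
Definition eval1 (al : form1) (Y : vfield) : P -> R :=
  fun x => \sum_(a < N) al x 0 a * Y x 0 a.
Definition dfun (f : P -> R) : form1 := fun x => \row_a pd a f x.
Definition d1 (al : form1) : P -> 'M[R]_N :=
  fun x => \matrix_(a, b) (pd a (fun y => al y 0 b) x - pd b (fun y => al y 0 a) x).
Definition contr2 (Y : vfield) (om : P -> 'M[R]_N) : form1 :=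
  fun x => \row_b (\sum_(a < N) Y x 0 a * om x a b).

Definition Wmx (L : P -> R) (x : P) : 'M[R]_n :=
  \matrix_(i, j) pd (iv i) (pd (iv j) L) x.
Definition regular_on (D : set P) (L : P -> R) : Prop :=
  forall x, D x -> Wmx L x \in unitmx.
(* lambda^L_k = dz^k - dL/dqdot^j dq^j *)
Definition lamL (L : P -> R) (k : 'I_m) : form1 :=
  fun x => \row_a ((a == iz k)%:R - \sum_(j < n | a == iq j) pd (iv j) L x).
Definition Reeb (L : P -> R) (k : 'I_m) : vfield :=
  fun x => \row_a ((a == iz k)%:R -
     \sum_(j < n | a == iv j) \sum_(i < n)
        invmx (Wmx L x) i j * pd (iv i) (pd (iz k) L) x).
Definition energy (L : P -> R) : P -> R :=
  fun x => \sum_(i < n) x 0 (iv i) * pd (iv i) L x - L x.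

(* Y satisfies the defining equations of X_{E_L} on D:
   lambda_k(Y) = -E_L for all k, and
   i_Y dlambda_1 = dE_L - sum_k R_k(E_L) lambda_k
   (stated for every dlambda_k, which all coincide with dlambda_1). *)
Definition is_XEL (D : set P) (L : P -> R) (Y : vfield) : Prop :=
  forall x, D x ->
    (forall k : 'I_m, eval1 (lamL L k) Y x = - energy L x) /\
    (forall k : 'I_m, contr2 Y (d1 (lamL L k)) x =
       dfun (energy L) x - \sum_(l < m) act (Reeb L l) (energy L) x *: lamL L l x).

Definition dissipated (D : set P) (L : P -> R) (XE : vfield) (g : P -> R) : Prop :=
  forall x, D x ->
    act XE g x = - g x * \sum_(k < m) act (Reeb L k) (energy L) x.

End MContact.

(* Main.v *)
Require Import Defs.
From HB Require Import structures.
From mathcomp Require Import all_boot all_order all_algebra.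
From mathcomp Require Import all_classical all_reals all_analysis.
From mathcomp Require Import zify ring lra.
Import Order.TTheory GRing.Theory Num.Theory.
Import numFieldNormedType.Exports.
Local Open Scope classical_set_scope.
Local Open Scope ring_scope.
Set Implicit Arguments. Unset Strict Implicit.
Section S.
Variables (R : realType) (n m : nat).
Local Notation N := (n + n + m)%N.
Local Notation P := 'rV[R]_N.

Lemma sumN (c : 'I_N -> R) : \sum_(a < N) c a =
  \sum_(i < n) c (iq i) + \sum_(i < n) c (iv i) + \sum_(k < m) c (iz k).
Proof. by rewrite big_split_ord /= big_split_ord. Qed.

Lemma iqq i j : (@iq n m i == iq j) = (i == j).
Proof. apply/eqP/eqP => [/(congr1 val) /= /val_inj //|->//]. Qed.
Lemma ivv i j : (@iv n m i == iv j) = (i == j).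
Proof. apply/eqP/eqP => [/(congr1 val) /= H|->//]; apply/val_inj; move: H; rewrite /=; lia. Qed.
Lemma izz k l : (@iz n m k == iz l) = (k == l).
Proof. apply/eqP/eqP => [/(congr1 val) /= H|->//]; apply/val_inj; move: H; rewrite /=; lia. Qed.
Lemma iqv i j : (@iq n m i == iv j) = false.
Proof. apply/eqP => /(congr1 val) /=. have := ltn_ord i. lia. Qed.
Lemma ivq i j : (@iv n m i == iq j) = false.
Proof. apply/eqP => /(congr1 val) /=. have := ltn_ord j. lia. Qed.
Lemma iqz i k : (@iq n m i == iz k) = false.
Proof. apply/eqP => /(congr1 val) /=. have := ltn_ord i. lia. Qed.
Lemma izq i k : (@iz n m k == iq i) = false.
Proof. apply/eqP => /(congr1 val) /=. have := ltn_ord i. lia. Qed.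
Lemma ivz i k : (@iv n m i == iz k) = false.
Proof. apply/eqP => /(congr1 val) /=. have := ltn_ord i. lia. Qed.
Lemma izv i k : (@iz n m k == iv i) = false.
Proof. apply/eqP => /(congr1 val) /=. have := ltn_ord i. lia. Qed.

Lemma pd_crd a b (x : P) : pd a (fun y : P => y 0 b) x = (a == b)%:R.
Proof.
rewrite /pd.
have := @derive_mx _ _ 1 N id x (ebasis a) (@derivable_id _ _ x (ebasis a)).
rewrite derive_id => /(congr1 (fun M : 'M[R]_(1,N) => M 0 b)); rewrite !mxE => <-.
by rewrite eqxx eq_sym.
Qed.

Lemma pd_cst a (c : R) (x : P) : pd a (fun _ : P => c) x = 0.
Proof. exact: derive_cst. Qed.


Lemma near_cdom (U : set 'rV[R]_n) (x : P) : open U -> cdom U x -> \forall y \near x, cdom U y.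
Proof.
move=> oU Ux.
have : nbhs (qpart x) U by apply: open_nbhs_nbhs; split.
move/nbhs_ballP => [e e0 sU].
apply/nbhs_ballP; exists e => // y [_ Hb]; apply: sU; split => // i j.
rewrite !mxE. exact: Hb.
Qed.

Lemma derivable_crd b (x v : P) : derivable (fun y : P => y 0 b) x v.
Proof. by move/derivable_mxP : (@derivable_id _ _ x v); apply. Qed.

Lemma pd_sumprod k (f g : 'I_k -> P -> R) a (x : P) :
  (forall i, derivable (f i) x (ebasis a)) -> (forall i, derivable (g i) x (ebasis a)) ->
  pd a (fun y => \sum_(i < k) f i y * g i y) x =
  \sum_(i < k) (pd a (f i) x * g i x + f i x * pd a (g i) x).
Proof.
move=> df dg.
have -> : (fun y => \sum_(i < k) f i y * g i y) = \sum_(i < k) (f i * g i).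
  by apply/funext => y; rewrite fct_sumE.
rewrite /pd derive_sum; last by move=> i; apply: derivableM.
apply: eq_bigr => i _; rewrite deriveM //. rewrite /GRing.scale /= addrC; congr (_ + _); exact: mulrC.
Qed.

Lemma derivable_sumprod k (f g : 'I_k -> P -> R) (x v : P) :
  (forall i, derivable (f i) x v) -> (forall i, derivable (g i) x v) ->
  derivable (fun y => \sum_(i < k) f i y * g i y) x v.
Proof.
move=> df dg.
have -> : (fun y => \sum_(i < k) f i y * g i y) = \sum_(i < k) (f i * g i).
  by apply/funext => y; rewrite fct_sumE.
by apply: derivable_sum => i; apply: derivableM.
Qed.

Lemma pd_sub (A B : P -> R) a (x : P) :
  derivable A x (ebasis a) -> derivable B x (ebasis a) ->
  pd a (fun y => A y - B y) x = pd a A x - pd a B x.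
Proof. move=> dA dB. exact: (deriveB dA dB). Qed.


Lemma sum_ivv (F : 'I_n -> R) j : \sum_(i < n | @iv n m j == iv i) F i = F j.
Proof. by rewrite (big_pred1 j) // => i; rewrite /= ivv eq_sym. Qed.
Lemma sum_iqq (F : 'I_n -> R) j : \sum_(i < n | @iq n m j == iq i) F i = F j.
Proof. by rewrite (big_pred1 j) // => i; rewrite /= iqq eq_sym. Qed.
Lemma sum_pred0 k (F : 'I_k -> R) (Q : pred 'I_k) : Q =1 xpred0 -> \sum_(i < k | Q i) F i = 0.
Proof. by move=> HQ; rewrite big_pred0. Qed.

Lemma act_vlift (Z : P -> P) f (x : P) :
  act (vlift Z) f x = \sum_(i < n) Z x 0 (iq i) * pd (iv i) f x.
Proof.
rewrite /act sumN.
rewrite (eq_bigr (fun=> 0)); last first.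
  by move=> i _; rewrite mxE sum_pred0 ?mul0r // => j; rewrite /= iqv.
rewrite [X in _ + X + _](eq_bigr (fun i => Z x 0 (iq i) * pd (iv i) f x)); last first.
  by move=> i _; rewrite mxE sum_ivv.
rewrite [X in _ + X](eq_bigr (fun=> 0)); last first.
  by move=> i _; rewrite mxE sum_pred0 ?mul0r // => j; rewrite /= izv.
rewrite big1 // [X in _ + X]big1 //. by rewrite add0r addr0.
Qed.

Lemma lam_q L k j (y : P) : lamL L k y 0 (iq j) = - pd (iv j) L y.
Proof. by rewrite mxE iqz sum_iqq sub0r. Qed.
Lemma lam_v L k j (y : P) : lamL L k y 0 (iv j) = 0.
Proof. by rewrite mxE ivz sum_pred0 ?subr0 // => i; rewrite /= ivq. Qed.
Lemma lam_z L k l (y : P) : lamL L k y 0 (iz l) = (l == k)%:R.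
Proof. by rewrite mxE izz sum_pred0 ?subr0 // => i; rewrite /= izq. Qed.

Lemma smooth0 D L (x : P) v : smooth_on D L -> D x -> derivable L x v.
Proof. by move=> sL Dx; apply: diff_derivable; exact: (sL [::] x Dx). Qed.
Lemma smooth1 D L (x : P) a v : smooth_on D L -> D x -> derivable (pd a L) x v.
Proof. by move=> sL Dx; apply: diff_derivable; exact: (sL [:: ebasis a] x Dx). Qed.
Lemma vsmooth D (Y : P -> P) (x : P) a v : vf_smooth_on D Y -> D x ->
  derivable (fun y => Y y 0 a) x v.
Proof. by move=> sY Dx; apply: diff_derivable; exact: (sY a [::] x Dx). Qed.

Lemma pd_energy D L a (x : P) : smooth_on D L -> D x ->
  pd a (energy L) x = \sum_(j < n) ((a == iv j)%:R * pd (iv j) L x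
     + x 0 (iv j) * pd a (pd (iv j) L) x) - pd a L x.
Proof.
move=> sL Dx; rewrite /energy pd_sub; last 2 first.
- apply: (derivable_sumprod (f := fun i y => y 0 (iv i)) (g := fun i => pd (iv i) L)) => i;
    [exact: derivable_crd | exact: smooth1 sL Dx].
- exact: smooth0 sL Dx.
rewrite pd_sumprod //; last by move=> i; exact: smooth1 sL Dx.
  by under eq_bigr do rewrite pd_crd.
by move=> i; exact: derivable_crd.
Qed.


Lemma contr_col (Y : P -> P) L k b (x : P) : contr2 Y (d1 (lamL L k)) x 0 b =
  \sum_(a < N) Y x 0 a * (pd a (fun y => lamL L k y 0 b) x - pd b (fun y => lamL L k y 0 a) x).
Proof. by rewrite mxE; apply: eq_bigr => a _; rewrite mxE. Qed.

Lemma pd_lam_q L k j a (x : P) : derivable (pd (iv j) L) x (ebasis a) ->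
  pd a (fun y => lamL L k y 0 (iq j)) x = - pd a (pd (iv j) L) x.
Proof.
move=> d; have -> : (fun y => lamL L k y 0 (iq j)) = - pd (iv j) L.
  by apply/funext => y; rewrite lam_q.
exact: deriveN.
Qed.
Lemma pd_lam_v L k j a (x : P) : pd a (fun y => lamL L k y 0 (iv j)) x = 0.
Proof.
have -> : (fun y => lamL L k y 0 (iv j)) = fun _ => 0 by apply/funext => y; rewrite lam_v.
exact: pd_cst.
Qed.
Lemma pd_lam_z L k l a (x : P) : pd a (fun y => lamL L k y 0 (iz l)) x = 0.
Proof.
have -> : (fun y => lamL L k y 0 (iz l)) = fun _ => (l == k)%:R by apply/funext => y; rewrite lam_z.
exact: pd_cst.
Qed.

Lemma rhs_entry (E : P -> R) L (c : 'I_m -> R) b (x : P) :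
  (dfun E x - \sum_(l < m) c l *: lamL L l x) 0 b = pd b E x - \sum_(l < m) c l * lamL L l x 0 b.
Proof. rewrite !mxE summxE; congr (_ - _); apply: eq_bigr => l _; by rewrite mxE. Qed.

Lemma sum_delta (F : 'I_n -> R) i : \sum_(j < n) ((@iv n m i == iv j)%:R * F j) = F i.
Proof.
rewrite (bigD1 i) //= eqxx mul1r big1 ?addr0 // => j /negbTE ji.
by rewrite ivv eq_sym ji mul0r.
Qed.

Lemma col_v D (Y : P -> P) L k i (x : P) : smooth_on D L -> D x ->
  contr2 Y (d1 (lamL L k)) x 0 (iv i) = \sum_(j < n) Y x 0 (iq j) * pd (iv i) (pd (iv j) L) x.
Proof.
move=> sL Dx; rewrite contr_col sumN.
rewrite (eq_bigr (fun j => Y x 0 (iq j) * pd (iv i) (pd (iv j) L) x)); last first.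
  by move=> j _; rewrite pd_lam_v pd_lam_q ?sub0r ?opprK //; exact: smooth1 sL Dx.
rewrite [X in _ + X + _]big1; last by move=> j _; rewrite !pd_lam_v subrr mulr0.
rewrite [X in _ + X]big1; last by move=> j _; rewrite pd_lam_v pd_lam_z subrr mulr0.
by rewrite !addr0.
Qed.

Lemma col_q D (Y : P -> P) L k i (x : P) : smooth_on D L -> D x ->
  contr2 Y (d1 (lamL L k)) x 0 (iq i) =
  - act Y (pd (iv i) L) x + \sum_(j < n) Y x 0 (iq j) * pd (iq i) (pd (iv j) L) x.
Proof.
move=> sL Dx; rewrite contr_col.
rewrite (eq_bigr (fun a => - (Y x 0 a * pd a (pd (iv i) L) x) -
   Y x 0 a * pd (iq i) (fun y => lamL L k y 0 a) x)); last first.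
  by move=> a _; rewrite pd_lam_q ?mulrBr ?mulrN //; exact: smooth1 sL Dx.
rewrite sumrB sumrN; congr (_ + _).
rewrite sumN.
rewrite (eq_bigr (fun j => - (Y x 0 (iq j) * pd (iq i) (pd (iv j) L) x))); last first.
  by move=> j _; rewrite pd_lam_q ?mulrN //; exact: smooth1 sL Dx.
rewrite [X in _ + X + _]big1; last by move=> j _; rewrite !pd_lam_v mulr0.
rewrite [X in _ + X]big1; last by move=> j _; rewrite pd_lam_z mulr0.
by rewrite !addr0 sumrN opprK.
Qed.


Lemma XE_q D L (Y : P -> P) (y : P) j : (0 < m)%N -> smooth_on D L -> regular_on D L ->
  is_XEL D L Y -> D y -> Y y 0 (iq j) = y 0 (iv j).
Proof.
move=> m0 sL reg HX Dy.
pose k : 'I_m := Ordinal m0.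
have [_ H] := HX y Dy.
have Ei i : \sum_(j < n) pd (iv i) (pd (iv j) L) y * (Y y 0 (iq j) - y 0 (iv j)) = 0.
  have := congr1 (fun M : P => M 0 (iv i)) (H k).
  rewrite /= (col_v _ _ _ sL Dy) rhs_entry (pd_energy _ sL Dy) big_split /= sum_delta.
  rewrite [X in _ - X]big1; last by move=> l _; rewrite lam_v mulr0.
  move=> E.
  rewrite (eq_bigr (fun j0 => Y y 0 (iq j0) * pd (iv i) (pd (iv j0) L) y -
                              y 0 (iv j0) * pd (iv i) (pd (iv j0) L) y)); last first.
    by move=> j0 _; rewrite mulrBr [_ * Y _ _ _]mulrC [_ * y _ _]mulrC.
  rewrite sumrB E. lra.
have Wu := reg y Dy.
pose w : 'cV[R]_n := \col_j (Y y 0 (iq j) - y 0 (iv j)).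
have Ww : Wmx L y *m w = 0.
  apply/matrixP => i c; rewrite !mxE -[RHS](Ei i); apply: eq_bigr => l _; by rewrite !mxE.
have w0 : w = 0 by rewrite -(mulKmx Wu w) Ww mulmx0.
have := congr1 (fun M : 'cV[R]_n => M j 0) w0; rewrite !mxE => /eqP.
by rewrite subr_eq0 => /eqP.
Qed.

Lemma herglotz D L (Y : P -> P) (x : P) i : (0 < m)%N -> smooth_on D L -> regular_on D L ->
  is_XEL D L Y -> D x ->
  act Y (pd (iv i) L) x = pd (iq i) L x -
     (\sum_(l < m) act (Reeb L l) (energy L) x) * pd (iv i) L x.
Proof.
move=> m0 sL reg HX Dx.
pose k : 'I_m := Ordinal m0.
have [_ H] := HX x Dx.
have := congr1 (fun M : P => M 0 (iq i)) (H k).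
rewrite /= (col_q _ _ _ sL Dx) rhs_entry (pd_energy _ sL Dx).
rewrite (eq_bigr (fun j => x 0 (iv j) * pd (iq i) (pd (iv j) L) x)); last first.
  by move=> j _; rewrite (XE_q j m0 sL reg HX Dx).
rewrite [X in _ = X - _ - _](eq_bigr (fun j => x 0 (iv j) * pd (iq i) (pd (iv j) L) x)); last first.
  by move=> j _; rewrite iqv mul0r add0r.
rewrite (eq_bigr (fun l => act (Reeb L l) (energy L) x * - pd (iv i) L x)); last first.
  by move=> l _; rewrite lam_q.
rewrite -big_distrl /=.
set A := act _ _ _; set S := \sum_(j < n) _; set r := \sum_(l < m) _.
move=> E. rewrite mulrN in E. lra.
Qed.


Lemma act_crd (Y : P -> P) b (x : P) : act Y (fun y => y 0 b) x = Y x 0 b.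
Proof.
rewrite /act (bigD1 b) //= pd_crd eqxx mulr1 big1 ?addr0 // => a /negbTE ab.
by rewrite pd_crd ab mulr0.
Qed.

Lemma act_sumprod k (Y : P -> P) (f g : 'I_k -> P -> R) (x : P) :
  (forall i v, derivable (f i) x v) -> (forall i v, derivable (g i) x v) ->
  act Y (fun y => \sum_(i < k) f i y * g i y) x =
  \sum_(i < k) (act Y (f i) x * g i x + f i x * act Y (g i) x).
Proof.
move=> df dg; rewrite /act.
rewrite (eq_bigr (fun a => \sum_(i < k) (Y x 0 a * pd a (f i) x * g i x +
     f i x * (Y x 0 a * pd a (g i) x)))); last first.
  move=> a _; rewrite pd_sumprod // big_distrr; apply: eq_bigr => i _.
  by rewrite /= mulrDr mulrA mulrCA.
rewrite exchange_big; apply: eq_bigr => i _.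
by rewrite big_split /= -big_distrl -big_distrr.
Qed.

End S.
Unset Implicit Arguments.

Theorem theorem3 (R : realType) (n m : nat) (U : set 'rV[R]_n)
    (L : 'rV[R]_(n + n + m) -> R) (XE X : 'rV[R]_(n + n + m) -> 'rV[R]_(n + n + m)) :
  (0 < m)%N ->
  open U ->
  smooth_on (cdom U) L ->
  regular_on (cdom U) L ->
  vf_smooth_on (cdom U) XE ->
  is_XEL (cdom U) L XE ->
  vf_smooth_on (cdom U) X ->
  (forall x, cdom U x ->
     - act X L x - act (vlift (lie XE X)) L x
     + \sum_(k < m) pd (iz k) L x * X x 0 (iz k) = 0) ->
  dissipated (cdom U) L XE (act (vlift X) L).
Proof.
move=> m0 oU sL reg sY HX sX Hyp x Dx.
have Hx := Hyp x Dx.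
have gE : act (vlift X) L = fun y => \sum_(i < n) X y 0 (iq i) * pd (iv i) L y.
  by apply/funext => y; rewrite act_vlift.
rewrite gE act_sumprod; last 2 first.
- by move=> i v; exact: vsmooth sX Dx.
- by move=> i v; exact: smooth1 sL Dx.
under eq_bigr do rewrite (herglotz _ m0 sL reg HX Dx).
rewrite act_vlift in Hx.
have loc i : act X (fun y => XE y 0 (iq i)) x = X x 0 (iv i).
  rewrite -(act_crd X (iv i) x) /act; apply: eq_bigr => b _; congr (_ * _).
  apply: near_eq_derive; apply: filterS (near_cdom oU Dx) => y Dy.
  exact: (XE_q i m0 sL reg HX Dy).
have lieS : \sum_(i < n) lie XE X x 0 (iq i) * pd (iv i) L x =
   \sum_(i < n) act XE (fun y => X y 0 (iq i)) x * pd (iv i) L x -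
   \sum_(i < n) X x 0 (iv i) * pd (iv i) L x.
  by rewrite -sumrB; apply: eq_bigr => i _; rewrite mxE loc mulrBl.
rewrite lieS in Hx.
have aXL : act X L x = \sum_(i < n) X x 0 (iq i) * pd (iq i) L x +
    \sum_(i < n) X x 0 (iv i) * pd (iv i) L x + \sum_(k < m) X x 0 (iz k) * pd (iz k) L x.
  by rewrite /act sumN.
rewrite aXL in Hx.
rewrite [X in _ + X = _](eq_bigr (fun k => X x 0 (iz k) * pd (iz k) L x)) in Hx; last first.
  by move=> k _; rewrite mulrC.
rewrite big_split /=.
rewrite [X in _ + X = _](eq_bigr (fun i => X x 0 (iq i) * pd (iq i) L x -
   (\sum_(l < m) act (Reeb L l) (energy L) x) * (X x 0 (iq i) * pd (iv i) L x))); last first.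
  by move=> i _; rewrite mulrBr mulrCA.
rewrite sumrB -big_distrr /=.
set A := \sum_(i < n) _ in Hx *; set B := \sum_(i < n) _ in Hx *.
set C := \sum_(i < n) _ in Hx *. set r := \sum_(l < m) _. set S := \sum_(i < n) _.
lra.
Qed.
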